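(* There is no arithmetical structure $(r_1,\dots,r_{18})$ on $K_{18}$ with $r_1=79$.
   Context: An arithmetical structure on the complete graph $K_n$ is an $n$-tuple $(r_1,r_2,\dots,r_n)$ of positive integers with $\gcd(r_1,\dots,r_n)=1$ such that $r_j$ divides $\sum_{i=1}^n r_i$ for every $j$. The entries are always listed so that $r_1\geq r_2\geq\dots\geq r_n$; thus $r_1$ is the largest value of the structure. *)

(* Defs.v *)
From mathcomp Require Import all_boot.
Set Implicit Arguments. Unset Strict Implicit. Unset Printing Implicit Defensive.

(* An arithmetical structure on the complete graph K_n: an n-tuple of positive
   integers r_0,...,r_{n-1} (0-indexed) with gcd 1 such that each r_j divides
   the total sum. *)
Definition arith_structure_Kn (n : nat) (r : 'I_n -> nat) : Prop :=
  (forall i, 0 < r i) /\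
  \big[gcdn/0]_(i < n) r i = 1 /\
  (forall j, r j %| \sum_(i < n) r i) /\
  (forall i j : 'I_n, i <= j -> r j <= r i).

(* Main.v *)
Require Import Defs.
From mathcomp Require Import all_boot.

Fixpoint orl (u w : seq bool) : seq bool :=
  match u, w with [::], _ => w | _, [::] => u | x :: u', y :: w' => (x || y) :: orl u' w' end.
Definition step (L : seq nat) (v : seq bool) :=
  foldr (fun d acc => orl (ncons d false v) acc) [::] L.
Fixpoint sums L n := match n with 0 => [:: true] | n'.+1 => step L (sums L n') end.
Definition Ld a := [seq d <- iota 1 79 | d %| 79 * a].

Lemma chk : all (fun a => ~~ nth false (sums (Ld a) 17) (79*a - 79)) (iota 0 18).
Proof. vm_compute. reflexivity. Qed.

Lemma nth_orl u w i : nth false (orl u w) i = nth false u i || nth false w i.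
Proof.
elim: u w i => [|x u IH] [|y w] [|i] //=; by rewrite ?orbF.
Qed.

Lemma nth_step L v d x : d \in L -> nth false v x -> nth false (step L v) (x + d).
Proof.
elim: L => [|e L IH] //=; rewrite inE nth_orl => /orP [/eqP -> Hx|Hd Hx].
  by rewrite nth_ncons ltnNge leq_addl /= addnK Hx.
by rewrite IH ?orbT.
Qed.

Lemma reach L n (f : 'I_n -> nat) : (forall i, f i \in L) ->
  nth false (sums L n) (\sum_(i < n) f i).
Proof.
elim: n f => [|n IH] f Hf; first by rewrite big_ord0.
rewrite big_ord_recr /=; apply: nth_step => //.
exact: IH.
Qed.

Theorem mainTheorem10 :
  ~ exists r : 'I_18 -> nat,
      arith_structure_Kn r /\ r ord0 = 79.
Proof.
move=> [r [[Hpos [Hg [Hdiv Hord]]] H0]].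
set S := \sum_(i < 18) r i.
have Hle i : r i <= 79 by rewrite -H0; apply: Hord.
have Hd : 79 %| S by rewrite -H0; apply: Hdiv.
have HS : S = 79 * (S %/ 79) by rewrite mulnC divnK.
set a := S %/ 79 in HS.
have HSle : S <= 18 * 79.
  have : \sum_(i < 18) r i <= \sum_(i < 18) 79 by apply: leq_sum => i _; apply: Hle.
  by rewrite sum_nat_const card_ord.
have Ha : a <= 18 by rewrite -(leq_pmul2l (isT : 0 < 79)) -HS mulnC.
have HL i : r i \in Ld a.
  rewrite mem_filter mem_iota Hpos -HS Hdiv /=.
  by rewrite add1n ltnS.
have Hsplit : S = r ord0 + \sum_(i < 17) r (lift ord0 i) by rewrite /S big_ord_recl.
have Hrest : \sum_(i < 17) r (lift ord0 i) = 79 * a - 79 by rewrite -HS Hsplit H0 addKn.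
have Hin := @reach (Ld a) 17 (fun i => r (lift ord0 i)) (fun i => HL (lift ord0 i)).
rewrite Hrest in Hin.
have := chk; move/allP.
rewrite leq_eqVlt in Ha; case/orP: Ha => [/eqP Ha18|Ha17]; last first.
  by move/(_ a); rewrite mem_iota leq0n add0n Ha17 Hin => /(_ isT).
move=> _.
have Hall : forall i, r (lift ord0 i) = 79.
  have H0s : \sum_(i < 17) (79 - r (lift ord0 i)) = 0.
    rewrite (sumnB _ (fun i _ => Hle (lift ord0 i))) Hrest Ha18.
    by rewrite sum_nat_const card_ord subnn.
  move=> i; move/eqP: H0s; rewrite sum_nat_eq0 => /forallP /(_ i) /=.
  rewrite subn_eq0 => H; apply/eqP; rewrite eqn_leq Hle H.
  done.
have Hr79 : forall i, r i = 79.
  move=> i; case: (unliftP ord0 i) => [j ->|->] //.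
move: Hg; rewrite (eq_bigr (fun _ => 79)) => [|i _]; last exact: Hr79.
by rewrite big_const_ord.
Qed.
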